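(* In the notation below, suppose $0<d_n\le1$ for all $n$ and $d_n\ge C|n|^{-\zeta}$ for all $n\neq0$, for some constants $C>0$ and $\zeta<\tfrac12$. Then for every sufficiently small $C_0>0$ there exists $\gamma'>0$ such that for all integers $s\ge1$, $$A(s):=\Big(\frac{15}{16}+\frac1{16}\sup_{|k|\ge t_sC_0/\|a\|_\infty}|\hat r(k)|^2\Big)^{1/2}\le\exp\!\big(-\gamma'|s|^{-2\zeta}\big),$$ where $t_s=\min(d_{2s-1},d_{2s})$.
   Context: $r:\mathbb R\to[0,\infty)$ is bounded, measurable, compactly supported, with $\int r=1$; $\hat r(k)=\int_{\mathbb R}e^{-2\pi ikx}r(x)\,dx$. $(a_n)_{n\in\mathbb Z}$ is a bounded real sequence with $a_n\ge\delta>0$ and $\|a\|_\infty=\sup_n a_n$. *)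

(* Defs.v *)
From Stdlib Require Import Reals Lra Lia ZArith ClassicalEpsilon.
Open Scope R_scope.

(** Henstock–Kurzweil (gauge) integral on a compact interval [a,b].
    For bounded functions on a bounded interval this coincides with the
    Lebesgue integral, and gauge-integrability is equivalent to Lebesgue
    measurability. *)

Fixpoint rsum (f : R -> R) (p t : nat -> R) (n : nat) : R :=
  match n with
  | O => 0
  | S m => rsum f p t m + f (t m) * (p (S m) - p m)
  end.

Definition fine_tagged_partition (a b : R) (delta : R -> R) (n : nat)
  (p t : nat -> R) : Prop :=
  p O = a /\ p n = b /\
  forall i : nat, (i < n)%nat ->
    p i < p (S i) /\ p i <= t i <= p (S i) /\
    t i - delta (t i) < p i /\ p (S i) < t i + delta (t i).

Definition gauge_integral (f : R -> R) (a b I : R) : Prop :=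
  forall eps : R, 0 < eps ->
    exists delta : R -> R, (forall x, 0 < delta x) /\
      forall (n : nat) (p t : nat -> R),
        fine_tagged_partition a b delta n p t ->
        Rabs (rsum f p t n - I) < eps.

Definition Rint_cs (f : R -> R) (I : R) : Prop :=
  exists L : R, 0 <= L /\ (forall x, L < Rabs x -> f x = 0) /\
    gauge_integral f (- L) L I.

Definition Rint (f : R -> R) : R :=
  epsilon (inhabits 0) (fun I => Rint_cs f I).

(* hat r (k) = \int e^{-2 pi i k x} r(x) dx, via real and imaginary parts *)
Definition rhat_re (r : R -> R) (k : R) : R :=
  Rint (fun x => r x * cos (2 * PI * k * x)).
Definition rhat_im (r : R -> R) (k : R) : R :=
  Rint (fun x => - (r x * sin (2 * PI * k * x))).

Definition rhat_abs2 (r : R -> R) (k : R) : R :=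
  rhat_re r k ^ 2 + rhat_im r k ^ 2.

Definition Rsup (E : R -> Prop) : R :=
  epsilon (inhabits 0) (fun m => is_lub E m).

Definition sup_norm (a : Z -> R) : R := Rsup (fun y => exists n : Z, y = a n).

Definition t_s (d : Z -> R) (s : Z) : R :=
  Rmin (d (2 * s - 1)%Z) (d (2 * s)%Z).

Definition A_s (r : R -> R) (a d : Z -> R) (C0 : R) (s : Z) : R :=
  sqrt (15 / 16 + 1 / 16 *
    Rsup (fun y => exists k : R,
            t_s d s * C0 / sup_norm a <= Rabs k /\ y = rhat_abs2 r k)).

(* Main.v *)
Require Import Defs.
From Stdlib Require Import Reals Lra Lia ZArith ClassicalEpsilon.
Open Scope R_scope.

Notation FTP := fine_tagged_partition.

Lemma ftp_step a b d n p t i : FTP a b d n p t -> (i < n)%nat -> p i < p (S i).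
Proof. intros [_ [_ H]] Hi. apply (H i Hi). Qed.

Lemma ftp_mono a b d n p t : FTP a b d n p t ->
  forall i j, (i <= j)%nat -> (j <= n)%nat -> p i <= p j.
Proof.
  intros H i j Hij Hj. induction j as [|j IH].
  - replace i with 0%nat by lia. lra.
  - destruct (Nat.eq_dec i (S j)) as [->|Hne]. lra.
    assert (p j < p (S j)) by (apply (ftp_step a b d n p t j H); lia).
    assert (p i <= p j) by (apply IH; lia). lra.
Qed.

Lemma ftp_strict a b d n p t : FTP a b d n p t ->
  forall i j, (i < j)%nat -> (j <= n)%nat -> p i < p j.
Proof.
  intros H i j Hij Hj. destruct j as [|j]. lia.
  assert (p j < p (S j)) by (apply (ftp_step a b d n p t j H); lia).
  assert (p i <= p j) by (apply (ftp_mono a b d n p t H); lia). lra.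
Qed.

Lemma ftp_ab a b d n p t : FTP a b d n p t -> a <= b.
Proof.
  intros H. pose proof (ftp_mono a b d n p t H 0 n ltac:(lia) ltac:(lia)) as Hm.
  destruct H as [H0 [Hn _]]. lra.
Qed.

Lemma ftp_tag a b d n p t : FTP a b d n p t -> forall i, (i < n)%nat ->
  p i <= t i <= p (S i) /\ a <= t i <= b.
Proof.
  intros H i Hi.
  pose proof (ftp_mono a b d n p t H 0 i ltac:(lia) ltac:(lia)) as M1.
  pose proof (ftp_mono a b d n p t H (S i) n ltac:(lia) ltac:(lia)) as M2.
  destruct H as [H0 [Hn H]]. destruct (H i Hi) as [_ [Ht _]]. lra.
Qed.

Lemma ftp_aa a d n p t : FTP a a d n p t -> n = 0%nat.
Proof.
  intros H. destruct n as [|n]. reflexivity.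
  pose proof (ftp_strict a a d (S n) p t H 0 (S n) ltac:(lia) ltac:(lia)) as M.
  destruct H as [H0 [Hn _]]. lra.
Qed.

Lemma ftp_restrict a b d m p t : FTP a b d (S m) p t -> FTP a (p m) d m p t.
Proof.
  intros [H0 [Hn H]]. split; [exact H0|split; [reflexivity|]].
  intros i Hi. apply H. lia.
Qed.

Lemma ftp_empty a d : FTP a a d 0 (fun _ => a) (fun _ => a).
Proof. split; [reflexivity|split; [reflexivity|]]. intros; lia. Qed.

Lemma ftp_gauge_le a b d d' n p t : (forall x, d x <= d' x) -> FTP a b d n p t -> FTP a b d' n p t.
Proof.
  intros Hd [H0 [Hn H]]. split; [exact H0|split; [exact Hn|]].
  intros i Hi. destruct (H i Hi) as [A [B [C D]]]. pose proof (Hd (t i)).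
  repeat split; lra.
Qed.

Lemma rsum_ext f g p t p' t' n :
  (forall i, (i <= n)%nat -> p i = p' i) -> (forall i, (i < n)%nat -> f (t i) = g (t' i)) ->
  rsum f p t n = rsum g p' t' n.
Proof.
  induction n as [|n IH]; intros Hp Ht; simpl. reflexivity.
  rewrite IH by (intros; first [apply Hp | apply Ht]; lia).
  rewrite (Hp (S n)), (Hp n), (Ht n) by lia. reflexivity.
Qed.

Lemma rsum_lin f g al be p t n :
  rsum (fun x => al * f x + be * g x) p t n = al * rsum f p t n + be * rsum g p t n.
Proof. induction n as [|n IH]; simpl. ring. rewrite IH. ring. Qed.

Lemma rsum_le f g p t n :
  (forall i, (i < n)%nat -> f (t i) <= g (t i)) -> (forall i, (i < n)%nat -> p i <= p (S i)) ->
  rsum f p t n <= rsum g p t n.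
Proof.
  induction n as [|n IH]; intros Hf Hp; simpl. lra.
  assert (rsum f p t n <= rsum g p t n) by (apply IH; intros; [apply Hf|apply Hp]; lia).
  assert (f (t n) * (p (S n) - p n) <= g (t n) * (p (S n) - p n)).
  { apply Rmult_le_compat_r. pose proof (Hp n ltac:(lia)). lra. apply Hf; lia. }
  lra.
Qed.

Lemma rsum_abs_le f g p t n :
  (forall i, (i < n)%nat -> Rabs (f (t i)) <= g (t i)) -> (forall i, (i < n)%nat -> p i <= p (S i)) ->
  Rabs (rsum f p t n) <= rsum g p t n.
Proof.
  induction n as [|n IH]; intros Hf Hp; simpl. rewrite Rabs_R0; lra.
  assert (Rabs (rsum f p t n) <= rsum g p t n) by (apply IH; intros; [apply Hf|apply Hp]; lia).
  assert (Rabs (f (t n) * (p (S n) - p n)) <= g (t n) * (p (S n) - p n)).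
  { rewrite Rabs_mult. pose proof (Hp n ltac:(lia)).
    rewrite (Rabs_right (p (S n) - p n)) by lra.
    apply Rmult_le_compat_r. lra. apply Hf; lia. }
  pose proof (Rabs_triang (rsum f p t n) (f (t n) * (p (S n) - p n))). lra.
Qed.

Lemma rsum_const c p t n : rsum (fun _ => c) p t n = c * (p n - p 0%nat).
Proof. induction n as [|n IH]; simpl. ring. rewrite IH. ring. Qed.

Lemma ftp_mono_step a b d n p t : FTP a b d n p t -> forall i, (i < n)%nat -> p i <= p (S i).
Proof. intros H i Hi. pose proof (ftp_step a b d n p t i H Hi). lra. Qed.

Definition cat_p (n1 : nat) (p1 p2 : nat -> R) i := if Nat.leb i n1 then p1 i else p2 (i - n1)%nat.
Definition cat_t (n1 : nat) (t1 t2 : nat -> R) i := if Nat.ltb i n1 then t1 i else t2 (i - n1)%nat.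

Lemma rsum_cat f n1 p1 t1 n2 p2 t2 : p1 n1 = p2 0%nat ->
  rsum f (cat_p n1 p1 p2) (cat_t n1 t1 t2) (n1 + n2) = rsum f p1 t1 n1 + rsum f p2 t2 n2.
Proof.
  intros E. unfold cat_p, cat_t. induction n2 as [|m IH].
  - rewrite Nat.add_0_r. simpl. rewrite Rplus_0_r. apply rsum_ext.
    intros i Hi. destruct (Nat.leb_spec i n1); lia || reflexivity.
    intros i Hi. destruct (Nat.ltb_spec i n1); lia || reflexivity.
  - rewrite Nat.add_succ_r. cbn [rsum]. rewrite IH.
    assert (E1 : (S (n1 + m) <=? n1) = false) by (apply Nat.leb_gt; lia).
    assert (E2 : (n1 + m <? n1) = false) by (apply Nat.ltb_ge; lia).
    rewrite E1, E2.
    replace (S (n1 + m) - n1)%nat with (S m) by lia.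
    replace (n1 + m - n1)%nat with m by lia.
    destruct (Nat.leb_spec (n1 + m) n1).
    + assert (m = 0%nat) by lia. subst m. rewrite Nat.add_0_r, E. cbn [rsum]. ring.
    + cbn [rsum]. ring.
Qed.

Lemma ftp_cat a b c d n1 p1 t1 n2 p2 t2 :
  FTP a b d n1 p1 t1 -> FTP b c d n2 p2 t2 ->
  FTP a c d (n1 + n2) (cat_p n1 p1 p2) (cat_t n1 t1 t2) /\
  forall f, rsum f (cat_p n1 p1 p2) (cat_t n1 t1 t2) (n1 + n2) = rsum f p1 t1 n1 + rsum f p2 t2 n2.
Proof.
  intros H1 H2. pose proof H1 as [A0 [An HA]]. pose proof H2 as [B0 [Bn HB]].
  split.
  - unfold cat_p, cat_t. split; [|split].
    + simpl. exact A0.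
    + destruct (Nat.leb_spec (n1 + n2) n1).
      * assert (n2 = 0%nat) by lia. subst n2. rewrite Nat.add_0_r. congruence.
      * replace (n1 + n2 - n1)%nat with n2 by lia. exact Bn.
    + intros i Hi. destruct (Nat.leb_spec i n1); destruct (Nat.leb_spec (S i) n1);
      destruct (Nat.ltb_spec i n1); try lia.
      * apply HA; lia.
      * assert (i = n1) by lia. subst i. rewrite Nat.sub_diag.
        replace (S n1 - n1)%nat with 1%nat by lia. rewrite An, <- B0. apply HB. lia.
      * replace (S i - n1)%nat with (S (i - n1)) by lia. apply HB. lia.
  - intros f. apply rsum_cat. congruence.
Qed.

Definition one_p (x y : R) (i : nat) := match i with O => x | _ => y end.

Lemma ftp_one x y tg d : x < y -> x <= tg <= y -> tg - d tg < x -> y < tg + d tg ->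
  FTP x y d 1 (one_p x y) (fun _ => tg).
Proof.
  intros. split; [reflexivity|split;[reflexivity|]]. intros i Hi.
  replace i with 0%nat by lia. simpl. repeat split; lra.
Qed.

Lemma rsum_one f x y tg : rsum f (one_p x y) (fun _ => tg) 1 = f tg * (y - x).
Proof. simpl. ring. Qed.

Lemma ftp_ext1 a x y tg d n p t : FTP a x d n p t -> x < y -> x <= tg <= y ->
  tg - d tg < x -> y < tg + d tg -> exists n' p' t', FTP a y d n' p' t'.
Proof.
  intros H Hxy Ht H1 H2. pose proof (ftp_one x y tg d Hxy Ht H1 H2) as Ho.
  destruct (ftp_cat _ _ _ _ _ _ _ _ _ _ H Ho) as [Hc _]. eauto.
Qed.

Lemma cousin a b d : (forall x, 0 < d x) -> a <= b -> exists n p t, FTP a b d n p t.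
Proof.
  intros Hd Hab.
  set (E := fun x => a <= x <= b /\ exists n p t, FTP a x d n p t).
  assert (HE : exists x, E x) by (exists a; split; [lra| exists 0%nat, (fun _ => a), (fun _ => a); apply ftp_empty]).
  assert (HB : bound E) by (exists b; intros x [Hx _]; lra).
  destruct (completeness E HB HE) as [s [Hub Hlub]].
  assert (Has : a <= s) by (apply Hub; destruct HE as [x Hx]; split; [lra|]; exists 0%nat, (fun _ => a), (fun _ => a); apply ftp_empty).
  assert (Hsb : s <= b) by (apply Hlub; intros x [Hx _]; lra).
  assert (Hs : exists n p t, FTP a s d n p t).
  { destruct (Req_dec s a) as [->|Hne].
    - exists 0%nat, (fun _ => a), (fun _ => a); apply ftp_empty.
    - assert (exists x, E x /\ s - d s < x).
      { apply Classical_Prop.NNPP. intros Hn.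
        assert (s <= s - d s). { apply Hlub. intros x Hx. apply Rnot_lt_le. intros Hlt. apply Hn. eauto. }
        pose proof (Hd s). lra. }
      destruct H as [x [[Hx [n [p [t Hp]]]] Hlt]].
      assert (x <= s) by (apply Hub; split; [lra|eauto]).
      destruct (Req_dec x s) as [->|Hxs]. eauto.
      pose proof (Hd s). apply (ftp_ext1 a x s s d n p t Hp); lra. }
  destruct (Req_dec s b) as [<-|Hsb']. exact Hs.
  exfalso. destruct Hs as [n [p [t Hp]]]. pose proof (Hd s).
  set (y := Rmin b (s + d s / 2)).
  assert (s < y) by (unfold y; apply Rmin_glb_lt; lra).
  assert (y <= b) by (unfold y; apply Rmin_l).
  assert (y <= s + d s / 2) by (unfold y; apply Rmin_r).
  assert (E y). { split. lra. apply (ftp_ext1 a s y s d n p t Hp); lra. }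
  pose proof (Hub y H3). lra.
Qed.

Definition gmin (d1 d2 : R -> R) := fun x => Rmin (d1 x) (d2 x).
Lemma gmin_pos d1 d2 : (forall x, 0 < d1 x) -> (forall x, 0 < d2 x) -> forall x, 0 < gmin d1 d2 x.
Proof. intros H1 H2 x. unfold gmin. apply Rmin_glb_lt; auto. Qed.
Lemma gmin_l d1 d2 x : gmin d1 d2 x <= d1 x. Proof. apply Rmin_l. Qed.
Lemma gmin_r d1 d2 x : gmin d1 d2 x <= d2 x. Proof. apply Rmin_r. Qed.

Lemma gi_unique f a b I J : a <= b -> gauge_integral f a b I -> gauge_integral f a b J -> I = J.
Proof.
  intros Hab HI HJ. apply Classical_Prop.NNPP. intros Hne.
  set (e := Rabs (I - J) / 2).
  assert (He : 0 < e) by (unfold e; apply Rdiv_lt_0_compat; [apply Rabs_pos_lt; lra|lra]).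
  destruct (HI e He) as [d1 [Hd1 H1]]. destruct (HJ e He) as [d2 [Hd2 H2]].
  destruct (cousin a b (gmin d1 d2) (gmin_pos _ _ Hd1 Hd2) Hab) as [n [p [t Hp]]].
  pose proof (H1 n p t (ftp_gauge_le _ _ _ _ _ _ _ (gmin_l d1 d2) Hp)) as A.
  pose proof (H2 n p t (ftp_gauge_le _ _ _ _ _ _ _ (gmin_r d1 d2) Hp)) as B.
  pose proof (Rabs_triang (rsum f p t n - J) (I - rsum f p t n)) as C.
  replace (rsum f p t n - J + (I - rsum f p t n)) with (I - J) in C by ring.
  rewrite Rabs_minus_sym in A. unfold e in *. lra.
Qed.

Lemma gi_ext f g a b I : (forall x, f x = g x) -> gauge_integral f a b I -> gauge_integral g a b I.
Proof.
  intros E H e He. destruct (H e He) as [d [Hd H1]]. exists d. split. exact Hd.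
  intros n p t Hp. rewrite <- (rsum_ext f g p t p t n); auto.
Qed.

Lemma gi_lin f g a b I J al be : gauge_integral f a b I -> gauge_integral g a b J ->
  gauge_integral (fun x => al * f x + be * g x) a b (al * I + be * J).
Proof.
  intros HI HJ e He.
  set (e' := e / (2 * (Rabs al + Rabs be + 1))).
  assert (He' : 0 < e') by (unfold e'; apply Rdiv_lt_0_compat; [lra|pose proof (Rabs_pos al); pose proof (Rabs_pos be); lra]).
  destruct (HI e' He') as [d1 [Hd1 H1]]. destruct (HJ e' He') as [d2 [Hd2 H2]].
  exists (gmin d1 d2). split. apply gmin_pos; auto.
  intros n p t Hp. rewrite rsum_lin.
  pose proof (H1 n p t (ftp_gauge_le _ _ _ _ _ _ _ (gmin_l d1 d2) Hp)) as A.
  pose proof (H2 n p t (ftp_gauge_le _ _ _ _ _ _ _ (gmin_r d1 d2) Hp)) as B.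
  replace (al * rsum f p t n + be * rsum g p t n - (al * I + be * J)) with
    (al * (rsum f p t n - I) + be * (rsum g p t n - J)) by ring.
  eapply Rle_lt_trans. apply Rabs_triang. rewrite !Rabs_mult.
  assert (Rabs al * Rabs (rsum f p t n - I) <= Rabs al * e') by (apply Rmult_le_compat_l; [apply Rabs_pos|lra]).
  assert (Rabs be * Rabs (rsum g p t n - J) <= Rabs be * e') by (apply Rmult_le_compat_l; [apply Rabs_pos|lra]).
  assert ((Rabs al + Rabs be) * e' < e).
  { unfold e'. pose proof (Rabs_pos al); pose proof (Rabs_pos be).
    apply (Rmult_lt_reg_r (2 * (Rabs al + Rabs be + 1))). lra.
    field_simplify; nra. }
  nra.
Qed.

Lemma gi_const c a b : gauge_integral (fun _ => c) a b (c * (b - a)).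
Proof.
  intros e He. exists (fun _ => 1). split. intros; lra.
  intros n p t [H0 [Hn _]]. rewrite rsum_const, H0, Hn. unfold Rminus at 1. rewrite Rplus_opp_r, Rabs_R0. exact He.
Qed.

Lemma gi_le f g a b I J : a <= b -> (forall x, a <= x <= b -> f x <= g x) ->
  gauge_integral f a b I -> gauge_integral g a b J -> I <= J.
Proof.
  intros Hab Hfg HI HJ. apply Rnot_lt_le. intros Hlt.
  set (e := (I - J) / 2). assert (He : 0 < e) by (unfold e; lra).
  destruct (HI e He) as [d1 [Hd1 H1]]. destruct (HJ e He) as [d2 [Hd2 H2]].
  destruct (cousin a b (gmin d1 d2) (gmin_pos _ _ Hd1 Hd2) Hab) as [n [p [t Hp]]].
  pose proof (H1 n p t (ftp_gauge_le _ _ _ _ _ _ _ (gmin_l d1 d2) Hp)) as A.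
  pose proof (H2 n p t (ftp_gauge_le _ _ _ _ _ _ _ (gmin_r d1 d2) Hp)) as B.
  assert (rsum f p t n <= rsum g p t n).
  { apply rsum_le. intros i Hi. apply Hfg. apply (ftp_tag _ _ _ _ _ _ Hp i Hi).
    apply (ftp_mono_step _ _ _ _ _ _ Hp). }
  apply Rabs_def2 in A. apply Rabs_def2 in B. unfold e in *. lra.
Qed.

Lemma gi_aa f a : gauge_integral f a a 0.
Proof.
  intros e He. exists (fun _ => 1). split. intros; lra.
  intros n p t Hp. rewrite (ftp_aa _ _ _ _ _ Hp). simpl. rewrite Rminus_0_r, Rabs_R0. exact He.
Qed.

Lemma ftp_split a b c d n p t : (forall x, 0 < d x) -> FTP a c d n p t -> a <= b <= c ->
  (forall x, x <> b -> d x <= Rabs (x - b)) ->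
  exists n1 p1 t1 n2 p2 t2, FTP a b d n1 p1 t1 /\ FTP b c d n2 p2 t2 /\
    forall f, rsum f p t n = rsum f p1 t1 n1 + rsum f p2 t2 n2.
Proof.
  intros Hpos H Hb Hf. revert c H Hb. induction n as [|m IH]; intros c H Hb.
  - pose proof H as [H0 [Hn _]]. assert (Eb : b = c) by lra.
    exists 0%nat, (fun _ => a), (fun _ => a), 0%nat, (fun _ => c), (fun _ => c).
    split. { split. reflexivity. split. simpl. lra. intros; lia. }
    split. { split. simpl. lra. split. reflexivity. intros; lia. }
    intros; simpl; ring.
  - pose proof (ftp_restrict _ _ _ _ _ _ H) as Hr.
    pose proof H as [H0 [Hn HH]]. destruct (HH m ltac:(lia)) as [L1 [[L2 L3] [L4 L5]]].
    rewrite Hn in L1, L3, L5.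
    destruct (Rle_lt_dec b (p m)) as [Hbm|Hbm].
    + destruct (IH (p m) Hr) as [n1 [p1 [t1 [n2 [p2 [t2 [F1 [F2 FS]]]]]]]].
      { split. lra. exact Hbm. }
      pose proof (ftp_one (p m) c (t m) d L1 (conj L2 L3) L4 L5) as Ho.
      destruct (ftp_cat _ _ _ _ _ _ _ _ _ _ F2 Ho) as [Fc FcS].
      eexists n1, p1, t1, _, _, _. split. exact F1. split. exact Fc.
      intros f. rewrite FcS, rsum_one. cbn [rsum]. rewrite FS, Hn. ring.
    + destruct (Req_dec b c) as [Ebc|Nbc].
      * subst b. exists (S m), p, t, 0%nat, (fun _ => c), (fun _ => c).
        split. exact H. split. apply ftp_empty. intros; simpl; ring.
      * assert (Etb : t m = b).
        { apply Classical_Prop.NNPP. intros Hne. pose proof (Hf (t m) Hne) as Hd.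
          destruct (Rle_lt_dec (t m) b).
          - rewrite Rabs_left1 in Hd by lra. lra.
          - rewrite Rabs_right in Hd by lra. lra. }
        rewrite Etb in L4, L5. pose proof (Hpos b).
        pose proof (ftp_one (p m) b b d Hbm ltac:(lra) L4 ltac:(lra)) as Ho1.
        pose proof (ftp_one b c b d ltac:(destruct Hb; lra) ltac:(destruct Hb; lra) ltac:(lra) L5) as Ho2.
        destruct (ftp_cat _ _ _ _ _ _ _ _ _ _ Hr Ho1) as [Fc FcS].
        eexists _, _, _, _, _, _. split. exact Fc. split. exact Ho2.
        intros f. rewrite FcS, !rsum_one. cbn [rsum]. rewrite Hn, Etb. ring.
Qed.

Definition force (b : R) := fun x => if Req_dec_T x b then 1 else Rabs (x - b).
Lemma force_pos b x : 0 < force b x.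
Proof. unfold force. destruct (Req_dec_T x b). lra. apply Rabs_pos_lt. lra. Qed.
Lemma force_le b x : x <> b -> force b x <= Rabs (x - b).
Proof. intros H. unfold force. destruct (Req_dec_T x b). contradiction. lra. Qed.

Lemma gi_add f a b c I1 I2 : a <= b <= c -> gauge_integral f a b I1 -> gauge_integral f b c I2 ->
  gauge_integral f a c (I1 + I2).
Proof.
  intros Hb H1 H2 e He.
  destruct (H1 (e/2) ltac:(lra)) as [d1 [Hd1 G1]]. destruct (H2 (e/2) ltac:(lra)) as [d2 [Hd2 G2]].
  set (d := gmin (gmin d1 d2) (force b)).
  assert (Hd : forall x, 0 < d x) by (apply gmin_pos; [apply gmin_pos; auto| apply force_pos]).
  exists d. split. exact Hd. intros n p t Hp.
  destruct (ftp_split a b c d n p t Hd Hp Hb) as [n1 [p1 [t1 [n2 [p2 [t2 [F1 [F2 FS]]]]]]]].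
  { intros x Hx. unfold d. eapply Rle_trans. apply gmin_r. apply force_le; auto. }
  rewrite FS.
  assert (E1 : forall x, d x <= d1 x) by (intros; unfold d; eapply Rle_trans; [apply gmin_l|apply gmin_l]).
  assert (E2 : forall x, d x <= d2 x) by (intros; unfold d; eapply Rle_trans; [apply gmin_l|apply gmin_r]).
  pose proof (G1 _ _ _ (ftp_gauge_le _ _ _ _ _ _ _ E1 F1)) as A.
  pose proof (G2 _ _ _ (ftp_gauge_le _ _ _ _ _ _ _ E2 F2)) as B.
  apply Rabs_def2 in A. apply Rabs_def2 in B. apply Rabs_def1; lra.
Qed.

Fixpoint Gm (D : nat -> R -> R) (k : nat) (x : R) : R :=
  match k with O => D O x | S k => Rmin (Gm D k x) (D (S k) x) end.

Lemma Gm_pos D : (forall k x, 0 < D k x) -> forall k x, 0 < Gm D k x.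
Proof. intros H k x. induction k; simpl. auto. apply Rmin_glb_lt; auto. Qed.

Lemma Gm_le D : forall k j x, (j <= k)%nat -> Gm D k x <= D j x.
Proof.
  induction k; intros j x Hj; simpl.
  - replace j with 0%nat by lia. lra.
  - destruct (Nat.eq_dec j (S k)) as [->|Hne]. apply Rmin_r.
    eapply Rle_trans. apply Rmin_l. apply IHk. lia.
Qed.

Lemma small_inv e : 0 < e -> exists N : nat, / INR (S N) < e.
Proof.
  intros He. destruct (archimed (/ e)) as [H1 _].
  assert (0 < / e) by (apply Rinv_0_lt_compat; lra).
  assert (0 <= IZR (up (/ e))) by lra.
  exists (Z.to_nat (up (/ e))).
  rewrite S_INR, INR_IZR_INZ, Z2Nat.id by (apply le_IZR; lra).
  apply (Rmult_lt_reg_r (IZR (up (/ e)) + 1)). lra.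
  rewrite Rinv_l by lra.
  apply (Rmult_lt_reg_l (/ e)). auto.
  replace (/ e * (e * (IZR (up (/ e)) + 1))) with (IZR (up (/ e)) + 1) by (field; lra).
  lra.
Qed.

Lemma gi_cauchy f a b : a <= b ->
  (forall e, 0 < e -> exists d, (forall x, 0 < d x) /\
     forall n p t n' p' t', FTP a b d n p t -> FTP a b d n' p' t' ->
       Rabs (rsum f p t n - rsum f p' t' n') < e) ->
  exists I, gauge_integral f a b I.
Proof.
  intros Hab HC.
  set (PD := fun (k : nat) (d : R -> R) => (forall x, 0 < d x) /\
     forall n p t n' p' t', FTP a b d n p t -> FTP a b d n' p' t' ->
       Rabs (rsum f p t n - rsum f p' t' n') < / INR (S k)).
  set (D := fun k => epsilon (inhabits (fun _ : R => 1)) (PD k)).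
  assert (HD : forall k, PD k (D k)).
  { intros k. apply epsilon_spec. apply HC. apply Rinv_0_lt_compat. apply lt_0_INR. lia. }
  assert (HDp : forall k x, 0 < D k x) by (intros k; apply (HD k)).
  set (PP := fun (k : nat) (q : nat * (nat -> R) * (nat -> R)) =>
           FTP a b (Gm D k) (fst (fst q)) (snd (fst q)) (snd q)).
  set (Q := fun k => epsilon (inhabits (0%nat, (fun _ : nat => 0), (fun _ : nat => 0))) (PP k)).
  assert (HQ : forall k, PP k (Q k)).
  { intros k. apply epsilon_spec. destruct (cousin a b (Gm D k) (Gm_pos D HDp k) Hab) as [n [p [t Hp]]].
    exists (n, p, t). exact Hp. }
  set (s := fun k => rsum f (snd (fst (Q k))) (snd (Q k)) (fst (fst (Q k)))).
  assert (Hs : forall N k l, (N <= k)%nat -> (N <= l)%nat -> Rabs (s k - s l) < / INR (S N)).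
  { intros N k l Hk Hl. apply (HD N).
    - apply (ftp_gauge_le _ _ (Gm D k)). intros x; apply Gm_le; auto. apply HQ.
    - apply (ftp_gauge_le _ _ (Gm D l)). intros x; apply Gm_le; auto. apply HQ. }
  assert (Hcc : Cauchy_crit s).
  { intros e He. destruct (small_inv e He) as [N HN]. exists N. intros k l Hk Hl.
    unfold R_dist. pose proof (Hs N k l Hk Hl). lra. }
  destruct (R_complete s Hcc) as [I HI]. exists I.
  intros e He. destruct (small_inv (e/2) ltac:(lra)) as [N HN].
  exists (D N). split. apply HDp. intros n p t Hp.
  destruct (HI (e/2) ltac:(lra)) as [N2 HN2].
  set (k := max N N2).
  pose proof (HN2 k ltac:(unfold k; lia)) as A. unfold R_dist in A.
  assert (B : Rabs (rsum f p t n - s k) < / INR (S N)).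
  { apply (HD N). exact Hp. apply (ftp_gauge_le _ _ (Gm D k)). intros x; apply Gm_le; unfold k; lia. apply HQ. }
  pose proof (Rabs_triang (rsum f p t n - s k) (s k - I)).
  replace (rsum f p t n - s k + (s k - I)) with (rsum f p t n - I) in H by ring. lra.
Qed.

Lemma gi_sub f a b c d I : gauge_integral f a b I -> a <= c -> c <= d -> d <= b ->
  exists J, gauge_integral f c d J.
Proof.
  intros HI Hac Hcd Hdb. apply gi_cauchy. exact Hcd.
  intros e He. destruct (HI (e/2) ltac:(lra)) as [g [Hg G]].
  exists g. split. exact Hg.
  destruct (cousin a c g Hg Hac) as [n1 [p1 [t1 E1]]].
  destruct (cousin d b g Hg Hdb) as [n2 [p2 [t2 E2]]].
  intros n p t n' p' t' Hp Hp'.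
  destruct (ftp_cat _ _ _ _ _ _ _ _ _ _ E1 Hp) as [C1 S1].
  destruct (ftp_cat _ _ _ _ _ _ _ _ _ _ C1 E2) as [C2 S2].
  destruct (ftp_cat _ _ _ _ _ _ _ _ _ _ E1 Hp') as [C1' S1'].
  destruct (ftp_cat _ _ _ _ _ _ _ _ _ _ C1' E2) as [C2' S2'].
  pose proof (G _ _ _ C2) as A. pose proof (G _ _ _ C2') as B.
  rewrite S2, S1 in A. rewrite S2', S1' in B.
  apply Rabs_def2 in A. apply Rabs_def2 in B. apply Rabs_def1; lra.
Qed.

Lemma rsum_zero f p t n : (forall i, (i < n)%nat -> f (t i) = 0) -> rsum f p t n = 0.
Proof.
  induction n as [|n IH]; intros H; simpl. reflexivity.
  rewrite IH by (intros; apply H; lia). rewrite H by lia. ring.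
Qed.

Lemma rsum_first f p t m : (forall i, (1 <= i <= m)%nat -> f (t i) = 0) ->
  rsum f p t (S m) = f (t 0%nat) * (p 1%nat - p 0%nat).
Proof.
  induction m as [|m IH]; intros H. simpl. ring.
  change (rsum f p t (S (S m))) with (rsum f p t (S m) + f (t (S m)) * (p (S (S m)) - p (S m))).
  rewrite IH by (intros; apply H; lia). rewrite (H (S m)) by lia. ring.
Qed.

Lemma gi_zero_left f b c : b <= c -> (forall x, b < x <= c -> f x = 0) -> gauge_integral f b c 0.
Proof.
  intros Hbc Hz e He.
  set (k := e / (2 * (Rabs (f b) + 1))).
  assert (Hk : 0 < k) by (unfold k; apply Rdiv_lt_0_compat; [lra| pose proof (Rabs_pos (f b)); lra]).
  exists (fun x => if Req_dec_T x b then k else 1). split.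
  { intros x. destruct (Req_dec_T x b); lra. }
  intros n p t Hp. rewrite Rminus_0_r. destruct n as [|m].
  { simpl. rewrite Rabs_R0. exact He. }
  rewrite rsum_first.
  2:{ intros i Hi. apply Hz. pose proof (ftp_tag _ _ _ _ _ _ Hp i ltac:(lia)) as [[T1 T2] [T3 T4]].
      pose proof (ftp_strict _ _ _ _ _ _ Hp 0 i ltac:(lia) ltac:(lia)). destruct Hp as [H0 _]. lra. }
  pose proof (ftp_tag _ _ _ _ _ _ Hp 0 ltac:(lia)) as [[T1 T2] [T3 T4]].
  pose proof Hp as [H0 [_ HH]]. destruct (HH 0%nat ltac:(lia)) as [L1 [_ [L4 L5]]].
  destruct (Req_dec (t 0%nat) b) as [E|E].
  - rewrite E in *. destruct (Req_dec_T b b) as [_|C]; [|congruence].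
    rewrite Rabs_mult, (Rabs_right (p 1%nat - p 0%nat)) by lra.
    assert (Rabs (f b) * (p 1%nat - p 0%nat) <= Rabs (f b) * k) by (apply Rmult_le_compat_l; [apply Rabs_pos|lra]).
    assert (Rabs (f b) * k < e).
    { unfold k. pose proof (Rabs_pos (f b)).
      apply (Rmult_lt_reg_r (2 * (Rabs (f b) + 1))). lra. field_simplify; nra. }
    lra.
  - rewrite (Hz (t 0%nat)) by lra. rewrite Rmult_0_l, Rabs_R0. exact He.
Qed.

Lemma gi_zero_right f a b : a <= b -> (forall x, a <= x < b -> f x = 0) -> gauge_integral f a b 0.
Proof.
  intros Hab Hz e He.
  set (k := e / (2 * (Rabs (f b) + 1))).
  assert (Hk : 0 < k) by (unfold k; apply Rdiv_lt_0_compat; [lra| pose proof (Rabs_pos (f b)); lra]).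
  exists (fun x => if Req_dec_T x b then k else 1). split.
  { intros x. destruct (Req_dec_T x b); lra. }
  intros n p t Hp. rewrite Rminus_0_r. destruct n as [|m].
  { simpl. rewrite Rabs_R0. exact He. }
  cbn [rsum]. rewrite rsum_zero.
  2:{ intros i Hi. apply Hz. pose proof (ftp_tag _ _ _ _ _ _ Hp i ltac:(lia)) as [[T1 T2] [T3 T4]].
      pose proof (ftp_mono _ _ _ _ _ _ Hp (S i) m ltac:(lia) ltac:(lia)).
      pose proof (ftp_strict _ _ _ _ _ _ Hp m (S m) ltac:(lia) ltac:(lia)). destruct Hp as [_ [Hn _]]. lra. }
  rewrite Rplus_0_l.
  pose proof (ftp_tag _ _ _ _ _ _ Hp m ltac:(lia)) as [[T1 T2] [T3 T4]].
  pose proof Hp as [H0 [Hn HH]]. destruct (HH m ltac:(lia)) as [L1 [_ [L4 L5]]].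
  destruct (Req_dec (t m) b) as [E|E].
  - rewrite E in *. destruct (Req_dec_T b b) as [_|C]; [|congruence].
    rewrite Rabs_mult, (Rabs_right (p (S m) - p m)) by lra.
    assert (Rabs (f b) * (p (S m) - p m) <= Rabs (f b) * k) by (apply Rmult_le_compat_l; [apply Rabs_pos|lra]).
    assert (Rabs (f b) * k < e).
    { unfold k. pose proof (Rabs_pos (f b)).
      apply (Rmult_lt_reg_r (2 * (Rabs (f b) + 1))). lra. field_simplify; nra. }
    lra.
  - rewrite (Hz (t m)) by lra. rewrite Rmult_0_l, Rabs_R0. exact He.
Qed.

Lemma gi_extend f L I A B : 0 <= L -> (forall x, L < Rabs x -> f x = 0) ->
  gauge_integral f (- L) L I -> A <= - L -> L <= B -> gauge_integral f A B I.
Proof.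
  intros HL Hz HI HA HB.
  assert (H1 : gauge_integral f A (- L) 0).
  { apply gi_zero_right. lra. intros x Hx. apply Hz. rewrite Rabs_left; lra. }
  assert (H2 : gauge_integral f L B 0).
  { apply gi_zero_left. lra. intros x Hx. apply Hz. rewrite Rabs_right; lra. }
  pose proof (gi_add f A (- L) L 0 I ltac:(lra) H1 HI) as H3.
  pose proof (gi_add f A L B (0 + I) 0 ltac:(lra) H3 H2) as H4.
  replace I with (0 + I + 0) by ring. exact H4.
Qed.

Lemma Rint_val f I : Rint_cs f I -> Rint f = I.
Proof.
  intros H. unfold Rint.
  assert (H' : Rint_cs f (epsilon (inhabits 0) (fun I => Rint_cs f I))).
  { apply epsilon_spec. eauto. }
  destruct H as [L [HL [Hz HI]]]. destruct H' as [L' [HL' [Hz' HI']]].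
  set (M := Rmax L L').
  assert (L <= M) by apply Rmax_l. assert (L' <= M) by apply Rmax_r.
  eapply gi_unique with (a := - M) (b := M) (f := f). lra.
  apply (gi_extend f L' _ _ _ HL' Hz' HI'); lra.
  apply (gi_extend f L _ _ _ HL Hz HI); lra.
Qed.

Fixpoint ssum (F : nat -> R) (m : nat) : R := match m with O => 0 | S m => ssum F m + F m end.

Lemma rsum_scal c f p t n : rsum (fun y => c * f y) p t n = c * rsum f p t n.
Proof. induction n as [|n IH]; simpl. ring. rewrite IH. ring. Qed.

Lemma rsum_nonneg f p t n : (forall i, (i < n)%nat -> 0 <= f (t i)) -> (forall i, (i < n)%nat -> p i <= p (S i)) ->
  0 <= rsum f p t n.
Proof.
  intros H1 H2. pose proof (rsum_le (fun _ => 0) f p t n H1 H2) as H. rewrite rsum_const in H. lra.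
Qed.

Lemma big_nat (c : R) : exists N : nat, c < INR N.
Proof.
  destruct (archimed (Rabs c)) as [H1 _]. pose proof (Rle_abs c).
  assert (0 <= IZR (up (Rabs c))) by (pose proof (Rabs_pos c); lra).
  exists (Z.to_nat (up (Rabs c))). rewrite INR_IZR_INZ, Z2Nat.id by (apply le_IZR; lra). lra.
Qed.

Lemma gi_prod f g a b I K G : a <= b -> (forall x, 0 <= f x) -> gauge_integral f a b I ->
  0 <= K -> (forall x y, Rabs (g x - g y) <= K * Rabs (x - y)) -> (forall x, Rabs (g x) <= G) ->
  exists J, gauge_integral (fun x => f x * g x) a b J.
Proof.
  intros Hab Hf HI HK HgL HgB.
  assert (HG : 0 <= G) by (pose proof (HgB 0); pose proof (Rabs_pos (g 0)); lra).
  apply gi_cauchy. exact Hab. intros e He.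
  destruct (big_nat (4 * K * (b - a) * (Rabs I + 1) / e)) as [N0 HN0].
  set (N := S N0).
  assert (HNpos : 0 < INR N) by (apply lt_0_INR; unfold N; lia).
  assert (HN : 4 * K * (b - a) * (Rabs I + 1) / e < INR N) by (unfold N; rewrite S_INR; lra).
  set (h := (b - a) / INR N).
  assert (Hh : 0 <= h) by (unfold h; apply Rmult_le_pos; [lra| left; apply Rinv_0_lt_compat; lra]).
  set (x := fun j : nat => a + INR j * h).
  assert (HxS : forall j, x (S j) = x j + h) by (intros j; unfold x; rewrite S_INR; ring).
  assert (Hx0 : x 0%nat = a) by (unfold x; simpl; ring).
  assert (HxN : x N = b) by (unfold x, h; field; lra).
  assert (Hxle : forall j, (j <= N)%nat -> a <= x j <= b).
  { intros j Hj. unfold x. split. pose proof (pos_INR j). nra.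
    apply le_INR in Hj. rewrite <- HxN. unfold x. nra. }
  set (e' := e / (4 * INR N * (G + 1))).
  assert (He' : 0 < e') by (unfold e'; apply Rdiv_lt_0_compat; [lra| nra]).
  set (PJ := fun (j : nat) (q : R * (R -> R)) => (forall y, 0 < snd q y) /\
     ((j < N)%nat -> forall n p t, FTP (x j) (x (S j)) (snd q) n p t -> Rabs (rsum f p t n - fst q) < e')).
  set (Q := fun j => epsilon (inhabits (0, fun _ : R => 1)) (PJ j)).
  assert (HQ : forall j, PJ j (Q j)).
  { intros j. apply epsilon_spec. destruct (Nat.lt_ge_cases j N) as [Hj|Hj].
    - destruct (gi_sub f a b (x j) (x (S j)) I HI) as [Ij HIj].
      apply Hxle; lia. rewrite HxS; lra. apply Hxle; lia.
      destruct (HIj e' He') as [dj [Hdj Gj]]. exists (Ij, dj). split. exact Hdj. intros _. exact Gj.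
    - exists (0, fun _ => 1). split. intros; simpl; lra. intros; lia. }
  destruct (HI 1 ltac:(lra)) as [df [Hdf Gf]].
  set (D := fun j y => Rmin (snd (Q j) y) (force (x j) y)).
  assert (HDp : forall j y, 0 < D j y) by (intros; unfold D; apply Rmin_glb_lt; [apply (HQ j)|apply force_pos]).
  set (d := fun y => Rmin (df y) (Gm D N y)).
  assert (Hdp : forall y, 0 < d y) by (intros; unfold d; apply Rmin_glb_lt; [apply Hdf|apply Gm_pos; auto]).
  assert (HdD : forall j y, (j <= N)%nat -> d y <= D j y).
  { intros j y Hj. unfold d. eapply Rle_trans. apply Rmin_r. apply Gm_le; auto. }
  assert (Hdf' : forall y, d y <= df y) by (intros; apply Rmin_l).
  set (Ij := fun j => fst (Q j)).
  assert (Main : forall m, (m <= N)%nat -> forall n p t, FTP a (x m) d n p t ->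
     Rabs (rsum (fun y => f y * g y) p t n - ssum (fun j => g (x j) * Ij j) m)
       <= K * h * rsum f p t n + INR m * G * e').
  { induction m as [|m IH]; intros Hm n p t Hp.
    - rewrite Hx0 in Hp. rewrite (ftp_aa _ _ _ _ _ Hp). simpl. rewrite Rminus_0_r, Rabs_R0. lra.
    - destruct (ftp_split a (x m) (x (S m)) d n p t Hdp Hp) as [n1 [p1 [t1 [n2 [p2 [t2 [F1 [F2 FS]]]]]]]].
      { split. apply Hxle; lia. rewrite HxS; lra. }
      { intros y Hy. eapply Rle_trans. apply (HdD m y); lia. unfold D. eapply Rle_trans. apply Rmin_r.
        apply force_le; auto. }
      pose proof (IH ltac:(lia) n1 p1 t1 F1) as A.
      assert (B : Rabs (rsum f p2 t2 n2 - Ij m) < e').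
      { apply (HQ m). lia. apply (ftp_gauge_le _ _ d). intros y. eapply Rle_trans. apply (HdD m y); lia.
        apply Rmin_l. exact F2. }
      assert (C : Rabs (rsum (fun y => f y * g y) p2 t2 n2 - g (x m) * rsum f p2 t2 n2) <= K * h * rsum f p2 t2 n2).
      { rewrite <- rsum_scal, <- (rsum_scal (K * h)).
        replace (rsum (fun y => f y * g y) p2 t2 n2 - rsum (fun y => g (x m) * f y) p2 t2 n2)
          with (rsum (fun y => 1 * (f y * g y) + (-1) * (g (x m) * f y)) p2 t2 n2)
          by (rewrite rsum_lin; ring).
        apply rsum_abs_le. 2: apply (ftp_mono_step _ _ _ _ _ _ F2).
        intros i Hi. pose proof (ftp_tag _ _ _ _ _ _ F2 i Hi) as [_ [T1 T2]].
        replace (1 * (f (t2 i) * g (t2 i)) + -1 * (g (x m) * f (t2 i))) with (f (t2 i) * (g (t2 i) - g (x m))) by ring.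
        rewrite Rabs_mult, (Rabs_right (f (t2 i))) by (apply Rle_ge; auto).
        rewrite (Rmult_comm (K * h)). apply Rmult_le_compat_l. auto.
        eapply Rle_trans. apply HgL. apply Rmult_le_compat_l. auto.
        rewrite HxS in T2. rewrite Rabs_right; lra. }
      rewrite !FS. cbn [ssum]. rewrite S_INR.
      pose proof (HgB (x m)) as Gx.
      assert (Rabs (g (x m)) * Rabs (rsum f p2 t2 n2 - Ij m) <= G * e').
      { apply Rmult_le_compat; try apply Rabs_pos; lra. }
      replace (rsum (fun y => f y * g y) p1 t1 n1 + rsum (fun y => f y * g y) p2 t2 n2 -
               (ssum (fun j => g (x j) * Ij j) m + g (x m) * Ij m))
        with ((rsum (fun y => f y * g y) p1 t1 n1 - ssum (fun j => g (x j) * Ij j) m)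
              + (rsum (fun y => f y * g y) p2 t2 n2 - g (x m) * rsum f p2 t2 n2)
              + g (x m) * (rsum f p2 t2 n2 - Ij m)) by ring.
      eapply Rle_trans. apply Rabs_triang. eapply Rle_trans. apply Rplus_le_compat_r. apply Rabs_triang.
      rewrite (Rabs_mult (g (x m))). lra. }
  exists d. split. exact Hdp.
  intros n p t n' p' t' Hp Hp'.
  rewrite <- HxN in Hp, Hp'.
  pose proof (Main N (le_n N) n p t Hp) as A. pose proof (Main N (le_n N) n' p' t' Hp') as B.
  rewrite HxN in Hp, Hp'.
  pose proof (Gf n p t (ftp_gauge_le _ _ _ _ _ _ _ Hdf' Hp)) as A1.
  pose proof (Gf n' p' t' (ftp_gauge_le _ _ _ _ _ _ _ Hdf' Hp')) as B1.
  apply Rabs_def2 in A1. apply Rabs_def2 in B1. pose proof (Rle_abs I).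
  assert (S1 : K * h * rsum f p t n <= K * h * (Rabs I + 1)) by (apply Rmult_le_compat_l; [nra|lra]).
  assert (S2 : K * h * rsum f p' t' n' <= K * h * (Rabs I + 1)) by (apply Rmult_le_compat_l; [nra|lra]).
  assert (S3 : 2 * (K * h * (Rabs I + 1)) < e / 2).
  { unfold h. apply (Rmult_lt_reg_r (INR N)). lra.
    replace (2 * (K * ((b - a) / INR N) * (Rabs I + 1)) * INR N) with (2 * K * (b - a) * (Rabs I + 1)) by (field; lra).
    apply (Rmult_lt_reg_r (2 / e)). apply Rdiv_lt_0_compat; lra.
    replace (e / 2 * INR N * (2 / e)) with (INR N) by (field; lra).
    replace (2 * K * (b - a) * (Rabs I + 1) * (2 / e)) with (4 * K * (b - a) * (Rabs I + 1) / e) by (field; lra).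
    lra. }
  assert (S4 : 2 * (INR N * G * e') < e / 2).
  { unfold e'. replace (2 * (INR N * G * (e / (4 * INR N * (G + 1))))) with (e / 2 * (G / (G + 1))) by (field; lra).
    assert (G / (G + 1) < 1) by (apply (Rmult_lt_reg_r (G + 1)); [lra| field_simplify; lra]).
    nra. }
  pose proof (Rabs_triang (rsum (fun y => f y * g y) p t n - ssum (fun j => g (x j) * Ij j) N)
                          (ssum (fun j => g (x j) * Ij j) N - rsum (fun y => f y * g y) p' t' n')) as T.
  rewrite (Rabs_minus_sym (ssum _ N)) in T.
  replace (rsum (fun y => f y * g y) p t n - ssum (fun j => g (x j) * Ij j) N +
      (ssum (fun j => g (x j) * Ij j) N - rsum (fun y => f y * g y) p' t' n')) with
      (rsum (fun y => f y * g y) p t n - rsum (fun y => f y * g y) p' t' n') in T by ring.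
  lra.
Qed.

Lemma abs_sin_le y : Rabs (sin y) <= Rabs y.
Proof.
  assert (Hp : forall y, 0 <= y -> Rabs (sin y) <= y).
  { intros z Hz. destruct (Req_dec z 0) as [->|Hne]. rewrite sin_0, Rabs_R0. lra.
    pose proof (sin_lt_x z ltac:(lra)). pose proof (SIN_bound z). pose proof PI2_3_2.
    apply Rabs_le. split; [|lra].
    destruct (Rle_lt_dec 1 z). lra. pose proof (sin_ge_0 z ltac:(lra) ltac:(lra)). lra. }
  destruct (Rle_lt_dec 0 y). rewrite (Rabs_right y) by lra. auto.
  pose proof (Hp (- y) ltac:(lra)) as H. rewrite sin_neg, Rabs_Ropp in H. rewrite (Rabs_left y) by lra. exact H.
Qed.

Lemma cos_lip u v : Rabs (cos u - cos v) <= Rabs (u - v).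
Proof.
  rewrite form2, !Rabs_mult. pose proof (abs_sin_le ((u - v) / 2)). pose proof (SIN_bound ((u + v) / 2)).
  assert (Rabs (sin ((u + v) / 2)) <= 1) by (apply Rabs_le; lra).
  replace (Rabs (-2)) with 2 by (rewrite Rabs_left; lra).
  replace (Rabs ((u - v) / 2)) with (Rabs (u - v) / 2) in H by (unfold Rdiv; rewrite Rabs_mult, (Rabs_right (/2)) by lra; ring).
  pose proof (Rabs_pos (sin ((u - v) / 2))). pose proof (Rabs_pos (sin ((u + v) / 2))). nra.
Qed.

Lemma sin_lip u v : Rabs (sin u - sin v) <= Rabs (u - v).
Proof.
  rewrite form4, !Rabs_mult. pose proof (abs_sin_le ((u - v) / 2)). pose proof (COS_bound ((u + v) / 2)).
  assert (Rabs (cos ((u + v) / 2)) <= 1) by (apply Rabs_le; lra).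
  replace (Rabs 2) with 2 by (rewrite Rabs_right; lra).
  replace (Rabs ((u - v) / 2)) with (Rabs (u - v) / 2) in H by (unfold Rdiv; rewrite Rabs_mult, (Rabs_right (/2)) by lra; ring).
  pose proof (Rabs_pos (sin ((u - v) / 2))). pose proof (Rabs_pos (cos ((u + v) / 2))). nra.
Qed.

Lemma cos_per_Z y z : cos (y + 2 * IZR z * PI) = cos y.
Proof.
  destruct (Z_le_gt_dec 0 z) as [Hz|Hz].
  - rewrite <- (Z2Nat.id z Hz), <- INR_IZR_INZ. apply cos_period.
  - assert (Hz' : (0 <= - z)%Z) by lia.
    rewrite <- (cos_period (y + 2 * IZR z * PI) (Z.to_nat (- z))).
    rewrite INR_IZR_INZ, Z2Nat.id by exact Hz'. rewrite opp_IZR. f_equal. ring.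
Qed.

Lemma angle_exists al be : al * al + be * be = 1 -> exists phi, cos phi = al /\ sin phi = be.
Proof.
  intros H. assert (Ha : -1 <= al <= 1) by nra.
  assert (Hs : sqrt (1 - al²) = Rabs be).
  { unfold Rsqr. replace (1 - al * al) with (be * be) by lra. rewrite <- Rsqr_def. apply sqrt_Rsqr_abs. }
  destruct (Rle_lt_dec 0 be).
  - exists (acos al). rewrite cos_acos, sin_acos by exact Ha. rewrite Hs, Rabs_right; lra.
  - exists (- acos al). rewrite cos_neg, sin_neg, cos_acos, sin_acos by exact Ha. rewrite Hs, Rabs_left; lra.
Qed.

Lemma cos_band v c : 0 <= c <= PI -> c <= v <= 2 * PI - c -> cos v <= cos c.
Proof.
  intros Hc Hv. destruct (Rle_lt_dec v PI).
  - destruct (Req_dec c v) as [->|Hne]. lra. left. apply cos_decreasing_1; lra.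
  - replace (cos v) with (cos (2 * PI - v)).
    2:{ rewrite cos_minus, cos_2PI, sin_2PI. ring. }
    destruct (Req_dec c (2 * PI - v)) as [<-|Hne]. lra. left. apply cos_decreasing_1; lra.
Qed.

Lemma gi_split_val f a b c I J1 J2 : a <= b <= c -> gauge_integral f a c I ->
  gauge_integral f a b J1 -> gauge_integral f b c J2 -> I = J1 + J2.
Proof.
  intros Hb H H1 H2. apply (gi_unique f a c). lra. exact H. apply (gi_add f a b c); auto.
Qed.

Lemma gi_scal f a b I c : gauge_integral f a b I -> gauge_integral (fun x => c * f x) a b (c * I).
Proof.
  intros H. pose proof (gi_lin f f a b I I c 0 H H) as H'.
  replace (c * I) with (c * I + 0 * I) by ring.
  apply (gi_ext (fun x => c * f x + 0 * f x)). intros; ring. exact H'.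
Qed.

Lemma chunk1 r F u P w lam B JF JR : 0 < w -> 2 * w <= P -> 0 <= lam ->
  (forall x, 0 <= F x) -> (forall x, 0 <= r x <= B) ->
  (forall x, u + w <= x <= u + P - w -> lam * r x <= F x) ->
  gauge_integral F u (u + P) JF -> gauge_integral r u (u + P) JR ->
  lam * (JR - 2 * B * w) <= JF.
Proof.
  intros Hw HP Hl HF Hr Hmid GF GR.
  destruct (gi_sub F u (u + P) u (u + w) JF GF) as [X1 HX1]; try lra.
  destruct (gi_sub F u (u + P) (u + w) (u + P - w) JF GF) as [X2 HX2]; try lra.
  destruct (gi_sub F u (u + P) (u + P - w) (u + P) JF GF) as [X3 HX3]; try lra.
  destruct (gi_sub r u (u + P) u (u + w) JR GR) as [R1 HR1]; try lra.
  destruct (gi_sub r u (u + P) (u + w) (u + P - w) JR GR) as [R2 HR2]; try lra.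
  destruct (gi_sub r u (u + P) (u + P - w) (u + P) JR GR) as [R3 HR3]; try lra.
  assert (EF : JF = X1 + X2 + X3).
  { apply (gi_split_val F u (u + P - w) (u + P)); try lra; auto. apply (gi_add F u (u + w) (u + P - w)); auto; lra. }
  assert (ER : JR = R1 + R2 + R3).
  { apply (gi_split_val r u (u + P - w) (u + P)); try lra; auto. apply (gi_add r u (u + w) (u + P - w)); auto; lra. }
  assert (A1 : 0 <= X1).
  { pose proof (gi_le (fun _ => 0) F u (u + w) _ X1 ltac:(lra) ltac:(intros; apply HF) (gi_const 0 u (u + w)) HX1). lra. }
  assert (A3 : 0 <= X3).
  { pose proof (gi_le (fun _ => 0) F (u + P - w) (u + P) _ X3 ltac:(lra) ltac:(intros; apply HF) (gi_const 0 _ _) HX3). lra. }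
  assert (B1 : R1 <= B * w).
  { pose proof (gi_le r (fun _ => B) u (u + w) R1 _ ltac:(lra) ltac:(intros; apply Hr) HR1 (gi_const B _ _)). lra. }
  assert (B3 : R3 <= B * w).
  { pose proof (gi_le r (fun _ => B) (u + P - w) (u + P) R3 _ ltac:(lra) ltac:(intros; apply Hr) HR3 (gi_const B _ _)). lra. }
  assert (A2 : lam * R2 <= X2).
  { apply (gi_le (fun x => lam * r x) F (u + w) (u + P - w)); auto. lra. apply gi_scal; auto. }
  subst. nra.
Qed.

Lemma chunks r F u0 P w lam B : 0 < w -> 2 * w <= P -> 0 <= lam ->
  (forall x, 0 <= F x) -> (forall x, 0 <= r x <= B) ->
  (forall (j : nat) x, u0 + INR j * P + w <= x <= u0 + INR j * P + P - w -> lam * r x <= F x) ->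
  forall m JF JR, gauge_integral F u0 (u0 + INR m * P) JF -> gauge_integral r u0 (u0 + INR m * P) JR ->
  lam * (JR - 2 * B * w * INR m) <= JF.
Proof.
  intros Hw HP Hl HF Hr Hmid. induction m as [|m IH]; intros JF JR GF GR.
  - simpl in *. rewrite Rmult_0_l, Rplus_0_r in GF, GR.
    rewrite (gi_unique F u0 u0 JF 0 ltac:(lra) GF (gi_aa F u0)).
    rewrite (gi_unique r u0 u0 JR 0 ltac:(lra) GR (gi_aa r u0)). lra.
  - assert (HP0 : 0 <= P) by lra. pose proof (pos_INR m).
    assert (Em : u0 + INR (S m) * P = (u0 + INR m * P) + P) by (rewrite S_INR; ring).
    rewrite Em in GF, GR.
    destruct (gi_sub F _ _ u0 (u0 + INR m * P) JF GF) as [F1 HF1]; try nra.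
    destruct (gi_sub F _ _ (u0 + INR m * P) (u0 + INR m * P + P) JF GF) as [F2 HF2]; try nra.
    destruct (gi_sub r _ _ u0 (u0 + INR m * P) JR GR) as [R1 HR1]; try nra.
    destruct (gi_sub r _ _ (u0 + INR m * P) (u0 + INR m * P + P) JR GR) as [R2 HR2]; try nra.
    rewrite (gi_split_val F u0 (u0 + INR m * P) (u0 + INR m * P + P) JF F1 F2) by (first [exact GF | exact HF1 | exact HF2 | split; nra]).
    rewrite (gi_split_val r u0 (u0 + INR m * P) (u0 + INR m * P + P) JR R1 R2) by (first [exact GR | exact HR1 | exact HR2 | split; nra]).
    pose proof (IH F1 R1 HF1 HR1).
    pose proof (chunk1 r F (u0 + INR m * P) P w lam B F2 R2 Hw HP Hl HF Hr (Hmid m) HF2 HR2).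
    rewrite S_INR. nra.
Qed.

Lemma rint_cs_of f L I : 0 <= L -> (forall x, L < Rabs x -> f x = 0) -> gauge_integral f (- L) L I -> Rint f = I.
Proof. intros. apply Rint_val. exists L. auto. Qed.

Lemma four_bound r L B : (forall x, 0 <= r x) -> (forall x, r x <= B) -> 1 <= B -> 1 <= L ->
  (forall x, L < Rabs x -> r x = 0) -> gauge_integral r (- L) L 1 ->
  forall k T, 0 < T -> T <= Rabs k ->
  rhat_abs2 r k <= 1 - 3 / 4 * (1 - cos (PI * T / (8 * B * (L * T + 1)))).
Proof.
  intros Hr0 HrB HB HL Hz HI k T HT HTk.
  pose proof PI2_3_2 as HPI.
  set (th := 2 * PI * k).
  assert (Hth : 0 < Rabs th) by (unfold th; rewrite !Rabs_mult, (Rabs_right 2), (Rabs_right PI) by lra; nra).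
  assert (Lipc : forall x y, Rabs (cos (th * x) - cos (th * y)) <= Rabs th * Rabs (x - y)).
  { intros. rewrite <- Rabs_mult. replace (th * (x - y)) with (th * x - th * y) by ring. apply cos_lip. }
  assert (Lips : forall x y, Rabs (sin (th * x) - sin (th * y)) <= Rabs th * Rabs (x - y)).
  { intros. rewrite <- Rabs_mult. replace (th * (x - y)) with (th * x - th * y) by ring. apply sin_lip. }
  destruct (gi_prod r (fun x => cos (th * x)) (- L) L 1 (Rabs th) 1 ltac:(lra) Hr0 HI ltac:(lra) Lipc
     ltac:(intros; apply Rabs_le; apply COS_bound)) as [Cv HCv].
  destruct (gi_prod r (fun x => sin (th * x)) (- L) L 1 (Rabs th) 1 ltac:(lra) Hr0 HI ltac:(lra) Lips
     ltac:(intros; apply Rabs_le; apply SIN_bound)) as [Sv HSv].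
  assert (ERe : rhat_re r k = Cv).
  { unfold rhat_re. apply (rint_cs_of _ L). lra. intros x Hx. rewrite Hz by exact Hx. ring. exact HCv. }
  assert (EIm : rhat_im r k = - Sv).
  { unfold rhat_im. apply (rint_cs_of _ L). lra. intros x Hx. rewrite Hz by exact Hx. ring.
    pose proof (gi_scal _ _ _ _ (-1) HSv) as H. replace (- Sv) with (-1 * Sv) by ring.
    revert H. apply gi_ext. intros x. unfold th. ring. }
  unfold rhat_abs2. rewrite ERe, EIm.
  set (aT := PI * T / (8 * B * (L * T + 1))).
  assert (HLT : T <= L * T) by nra.
  assert (HD8 : 8 * T <= 8 * B * (L * T + 1)) by nra.
  assert (HaT0 : 0 < aT) by (unfold aT; apply Rdiv_lt_0_compat; nra).
  assert (HaT1 : aT <= PI / 8).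
  { unfold aT. apply (Rmult_le_reg_r (8 * B * (L * T + 1))). nra.
    unfold Rdiv. rewrite Rmult_assoc, Rinv_l by nra. nra. }
  set (lam := 1 - cos aT).
  assert (Hlam0 : 0 <= lam) by (unfold lam; pose proof (COS_bound aT); lra).
  assert (Hlam1 : lam <= 1) by (unfold lam; pose proof (cos_ge_0 aT ltac:(lra) ltac:(lra)); lra).
  set (rho := sqrt (Cv ^ 2 + (- Sv) ^ 2)).
  assert (Hrho0 : 0 <= rho) by apply sqrt_pos.
  assert (Hrho2 : rho * rho = Cv ^ 2 + (- Sv) ^ 2) by (apply sqrt_sqrt; nra).
  destruct (Req_dec rho 0) as [Hr|Hr].
  { rewrite <- Hrho2, Hr. lra. }
  assert (Hrp : 0 < rho) by lra.
  set (al := Cv / rho). set (be := Sv / rho).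
  assert (Hab : al * al + be * be = 1).
  { unfold al, be. field_simplify; [|lra]. replace (Cv ^ 2 + Sv ^ 2) with (rho ^ 2) by nra. field. lra. }
  set (om := Rabs th).
  assert (Hom0 : 0 < om) by exact Hth.
  assert (Hphi : exists phi, forall x, cos (om * x - phi) = al * cos (th * x) + be * sin (th * x)).
  { destruct (Rle_lt_dec 0 th) as [Hs|Hs].
    - destruct (angle_exists al be Hab) as [phi [E1 E2]]. exists phi. intros x.
      unfold om. rewrite Rabs_right by lra. rewrite cos_minus, E1, E2. ring.
    - destruct (angle_exists al (- be) ltac:(lra)) as [phi [E1 E2]]. exists phi. intros x.
      unfold om. rewrite Rabs_left by lra. rewrite cos_minus, E1, E2.
      replace (- th * x) with (- (th * x)) by ring. rewrite cos_neg, sin_neg. ring. }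
  destruct Hphi as [phi Hphi].
  set (F := fun x => r x * (1 - cos (om * x - phi))).
  assert (HF0 : forall x, 0 <= F x) by (intros; unfold F; apply Rmult_le_pos; [auto| pose proof (COS_bound (om * x - phi)); lra]).
  assert (HFz : forall x, L < Rabs x -> F x = 0) by (intros x Hx; unfold F; rewrite Hz by exact Hx; ring).
  assert (HFI : gauge_integral F (- L) L (1 - rho)).
  { pose proof (gi_lin _ _ _ _ _ _ 1 (- al) HI HCv) as H1.
    pose proof (gi_lin _ _ _ _ _ _ 1 (- be) H1 HSv) as H2.
    replace (1 - rho) with (1 * (1 * 1 + - al * Cv) + - be * Sv).
    2:{ assert (al * Cv + be * Sv = rho).
        { unfold al, be. replace (Cv / rho * Cv + Sv / rho * Sv) with ((Cv ^ 2 + (- Sv) ^ 2) / rho) by (field; lra).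
          rewrite <- Hrho2. field. lra. }
        lra. }
    revert H2. apply gi_ext. intros x. unfold F. rewrite Hphi. ring. }
  set (P := 2 * PI / om). set (w := aT / om).
  assert (HP : 0 < P) by (unfold P; apply Rdiv_lt_0_compat; lra).
  assert (Hw : 0 < w) by (unfold w; apply Rdiv_lt_0_compat; lra).
  assert (H2w : 2 * w <= P).
  { unfold w, P. unfold Rdiv. rewrite <- Rmult_assoc. apply Rmult_le_compat_r. left; apply Rinv_0_lt_compat; lra. lra. }
  set (y := (- L * om - phi) / (2 * PI)).
  set (m0 := (up y - 1)%Z).
  destruct (archimed y) as [Ay1 Ay2].
  assert (Hm0a : IZR m0 <= y) by (unfold m0; rewrite minus_IZR; lra).
  assert (Hm0b : y - 1 < IZR m0) by (unfold m0; rewrite minus_IZR; lra).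
  set (u0 := (phi + 2 * PI * IZR m0) / om).
  assert (Hu0a : u0 <= - L).
  { unfold u0. apply (Rmult_le_reg_r om). lra. unfold Rdiv. rewrite Rmult_assoc, Rinv_l by lra.
    unfold y in Hm0a. apply (Rmult_le_compat_l (2 * PI)) in Hm0a; [|lra].
    replace (2 * PI * ((- L * om - phi) / (2 * PI))) with (- L * om - phi) in Hm0a by (field; lra). lra. }
  assert (Hu0b : - L - P < u0).
  { unfold u0, P. apply (Rmult_lt_reg_r om). lra.
    replace ((- L - 2 * PI / om) * om) with (- L * om - 2 * PI) by (field; lra).
    replace ((phi + 2 * PI * IZR m0) / om * om) with (phi + 2 * PI * IZR m0) by (field; lra).
    unfold y in Hm0b. apply (Rmult_lt_compat_l (2 * PI)) in Hm0b; [|lra].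
    replace (2 * PI * ((- L * om - phi) / (2 * PI) - 1)) with (- L * om - phi - 2 * PI) in Hm0b by (field; lra). lra. }
  set (z := 2 * L / P).
  destruct (archimed z) as [Az1 Az2].
  assert (Hz0 : 0 < z) by (unfold z; apply Rdiv_lt_0_compat; lra).
  set (n := S (Z.to_nat (up z))).
  assert (Hn : INR n = IZR (up z) + 1).
  { unfold n. rewrite S_INR, INR_IZR_INZ, Z2Nat.id. reflexivity. apply le_IZR. lra. }
  assert (HnP1 : L <= u0 + INR n * P).
  { rewrite Hn. assert ((IZR (up z) + 1) * P >= (z + 1) * P) by (apply Rmult_ge_compat_r; lra).
    assert (Ez : z * P = 2 * L) by (unfold z; field; lra).
    replace ((z + 1) * P) with (2 * L + P) in H by (rewrite Rmult_plus_distr_r, Ez; ring). lra. }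
  assert (Hwn : 2 * B * w * INR n <= 1 / 4).
  { rewrite Hn. assert (IZR (up z) + 1 <= z + 2) by lra.
    assert (w * (IZR (up z) + 1) <= w * (z + 2)) by (apply Rmult_le_compat_l; lra).
    assert (Hom : 2 * PI * T <= om).
    { unfold om, th. rewrite !Rabs_mult, (Rabs_right 2), (Rabs_right PI) by lra. nra. }
    assert (E : w * (z + 2) = aT * L / PI + 2 * aT / om).
    { unfold w, z, P. field. split; lra. }
    assert (E2 : 2 * aT / om <= 2 * aT / (2 * PI * T)).
    { unfold Rdiv. apply Rmult_le_compat_l. lra. apply Rinv_le_contravar. nra. exact Hom. }
    assert (E3 : aT * L / PI + 2 * aT / (2 * PI * T) = 1 / (8 * B)).
    { unfold aT. field. repeat split; nra. }
    assert (w * (IZR (up z) + 1) <= 1 / (8 * B)) by lra.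
    apply (Rmult_le_compat_l (2 * B)) in H1; [|lra].
    replace (2 * B * (1 / (8 * B))) with (1 / 4) in H1 by (field; lra). lra. }
  assert (GF : gauge_integral F u0 (u0 + INR n * P) (1 - rho)).
  { apply (gi_extend F L); auto; lra. }
  assert (GR : gauge_integral r u0 (u0 + INR n * P) 1).
  { apply (gi_extend r L); auto; lra. }
  assert (Hmid : forall (j : nat) x, u0 + INR j * P + w <= x <= u0 + INR j * P + P - w -> lam * r x <= F x).
  { intros j x Hx. unfold F, lam. rewrite (Rmult_comm (1 - cos aT)).
    apply Rmult_le_compat_l. auto.
    set (v := om * (x - u0 - INR j * P)).
    assert (Ev : om * x - phi = v + 2 * IZR (m0 + Z.of_nat j) * PI).
    { unfold v, u0, P. rewrite plus_IZR, <- INR_IZR_INZ. field. lra. }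
    rewrite Ev, cos_per_Z.
    assert (Hv1 : aT <= v).
    { unfold v. replace aT with (om * w) by (unfold w; field; lra). apply Rmult_le_compat_l; lra. }
    assert (Hv2 : v <= 2 * PI - aT).
    { unfold v. replace (2 * PI - aT) with (om * (P - w)) by (unfold w, P; field; lra). apply Rmult_le_compat_l; lra. }
    pose proof (cos_band v aT ltac:(lra) ltac:(lra)). lra. }
  pose proof (chunks r F u0 P w lam B Hw H2w Hlam0 HF0 ltac:(intros; split; auto) Hmid n (1 - rho) 1 GF GR) as Hch.
  assert (3 / 4 * lam <= 1 - rho) by nra.
  assert (rho <= 1) by lra.
  rewrite <- Hrho2. fold lam. nra.
Qed.

Lemma Rsup_lub E : (exists x, E x) -> bound E -> is_lub E (Rsup E).
Proof.
  intros H1 H2. unfold Rsup. apply epsilon_spec. destruct (completeness E H2 H1) as [m Hm]. eauto.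
Qed.

Lemma Rpower_pos' x y : 0 < Rpower x y.
Proof. unfold Rpower. apply exp_pos. Qed.

Lemma Rpower_anti x y z : 0 < x -> x <= y -> 0 <= z -> Rpower y (- z) <= Rpower x (- z).
Proof.
  intros Hx Hxy Hz. unfold Rpower.
  assert (ln x <= ln y) by (destruct (Req_dec x y) as [->|Hne]; [lra| left; apply ln_increasing; lra]).
  destruct (Req_dec (- z * ln y) (- z * ln x)) as [E|E]. rewrite E; lra.
  left. apply exp_increasing. nra.
Qed.

Lemma lam_lower a : 0 < a <= PI / 2 -> a ^ 2 / 4 <= 1 - cos a.
Proof.
  intros Ha. pose proof PI2_3_2. pose proof PI2_Rlt_PI.
  destruct (cos_bound a 0 ltac:(lra) ltac:(lra)) as [_ Hc].
  replace (cos_approx a (2 * (0 + 1))) with (1 - a^2/2 + a^4/24) in Hc by (unfold cos_approx, cos_term; simpl; field).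
  assert (a * a <= 6). { assert (a <= 2). { pose proof PI_4. lra. } nra. }
  nra.
Qed.

Lemma exp_mono x y : x <= y -> exp x <= exp y.
Proof. intros H. destruct (Req_dec x y) as [->|Hne]. lra. left. apply exp_increasing. lra. Qed.

Theorem lemma4p9 (r : R -> R) (a d : Z -> R) (delta C zeta : R) :
  (* hypotheses on r *)
  (forall x, 0 <= r x) ->
  (exists B, forall x, r x <= B) ->
  (exists L, 0 <= L /\ forall x, L < Rabs x -> r x = 0) ->
  Rint_cs r 1 ->
  (* hypotheses on a *)
  (exists M, forall n, a n <= M) ->
  0 < delta -> (forall n, delta <= a n) ->
  (* hypotheses on d *)
  (forall n, 0 < d n <= 1) ->
  0 < C -> zeta < 1 / 2 ->
  (forall n : Z, n <> 0%Z -> C * Rpower (IZR (Z.abs n)) (- zeta) <= d n) ->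
  exists C0max, 0 < C0max /\
    forall C0, 0 < C0 < C0max ->
      exists gamma', 0 < gamma' /\
        forall s : Z, (1 <= s)%Z ->
          A_s r a d C0 s <= exp (- (gamma' * Rpower (IZR s) (- (2 * zeta)))).
Proof.
  intros Hr0 [B0 HB0] _ Hint [M HM] Hdel Hda Hd HC Hzeta Hdn.
  pose proof PI2_3_2 as HPI. pose proof PI_4 as HPI4.
  assert (Hz0 : 0 <= zeta).
  { apply Rnot_lt_le. intros Hneg.
    set (q := ln (/ C) / (- zeta)).
    destruct (archimed (exp q)) as [A1 _].
    set (n := up (exp q)).
    assert (Hn1 : 0 < IZR n) by (pose proof (exp_pos q); unfold n; lra).
    assert (Hn0 : n <> 0%Z) by (intro E; rewrite E in Hn1; simpl in Hn1; lra).
    pose proof (Hdn n Hn0) as Hdn'. pose proof (Hd n) as [_ Hd1].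
    rewrite Z.abs_eq in Hdn' by (apply le_IZR; lra).
    assert (H1 : ln (IZR n) > q) by (rewrite <- (ln_exp q); apply ln_increasing; [apply exp_pos| unfold n; lra]).
    assert (H2 : - zeta * ln (IZR n) > ln (/ C)).
    { unfold q in H1. apply (Rmult_lt_compat_l (- zeta)) in H1; [|lra].
      replace (- zeta * (ln (/ C) / - zeta)) with (ln (/ C)) in H1 by (field; lra). lra. }
    assert (H3 : Rpower (IZR n) (- zeta) > / C).
    { unfold Rpower. rewrite <- (exp_ln (/ C)) by (apply Rinv_0_lt_compat; lra). apply exp_increasing. lra. }
    assert (H4 : C * Rpower (IZR n) (- zeta) > 1).
    { apply (Rmult_lt_compat_l C) in H3; [|lra]. rewrite Rinv_r in H3 by lra. lra. }
    lra. }
  destruct Hint as [L1 [HL1 [Hz1 HI1]]].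
  set (L := L1 + 1). set (B := Rmax B0 1).
  assert (HL : 1 <= L) by (unfold L; lra).
  assert (HB : 1 <= B) by (unfold B; apply Rmax_r).
  assert (HrB : forall x, r x <= B) by (intros; unfold B; eapply Rle_trans; [apply HB0| apply Rmax_l]).
  assert (HzL : forall x, L < Rabs x -> r x = 0) by (intros; apply Hz1; unfold L in *; lra).
  assert (HIL : gauge_integral r (- L) L 1) by (apply (gi_extend r L1); auto; unfold L; lra).
  set (Ea := fun y => exists n : Z, y = a n).
  assert (Hlub : is_lub Ea (sup_norm a)).
  { apply Rsup_lub. exists (a 0%Z). exists 0%Z. reflexivity. exists M. intros y [n ->]. apply HM. }
  assert (Hnorm1 : delta <= sup_norm a).
  { eapply Rle_trans. apply (Hda 0%Z). apply Hlub. exists 0%Z; reflexivity. }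
  assert (Hnorm2 : sup_norm a <= M). { apply Hlub. intros y [n ->]. apply HM. }
  exists delta. split. exact Hdel.
  intros C0 [HC0 HC0d].
  set (c2 := Rpower 2 (- zeta)).
  assert (Hc2 : 0 < c2) by apply Rpower_pos'.
  assert (HM0 : 0 < M) by lra.
  set (kap := C * c2 * C0 / M).
  assert (Hkap : 0 < kap).
  { unfold kap. apply Rdiv_lt_0_compat; [|lra]. apply Rmult_lt_0_compat; [apply Rmult_lt_0_compat|]; lra. }
  set (c1 := (PI / (8 * B * (L + 1))) ^ 2 / 4).
  assert (Hc1 : 0 < c1).
  { unfold c1. apply Rdiv_lt_0_compat; [|lra]. apply pow_lt. apply Rdiv_lt_0_compat; nra. }
  set (gam := 3 / 128 * c1 * kap ^ 2).
  exists gam. split. { unfold gam. pose proof (pow_lt kap 2 Hkap). nra. }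
  intros s Hs.
  assert (Hs1 : 1 <= IZR s) by (apply IZR_le; exact Hs).
  set (T := t_s d s * C0 / sup_norm a).
  assert (Htp : 0 < t_s d s) by (unfold t_s; apply Rmin_glb_lt; apply Hd).
  assert (Ht1 : t_s d s <= 1) by (unfold t_s; eapply Rle_trans; [apply Rmin_l| apply Hd]).
  assert (HN0 : 0 < sup_norm a) by lra.
  assert (HT0 : 0 < T) by (unfold T; apply Rdiv_lt_0_compat; nra).
  assert (HT1 : T <= 1).
  { unfold T. apply (Rmult_le_reg_r (sup_norm a)). lra.
    unfold Rdiv. rewrite Rmult_assoc, Rinv_l by lra. nra. }
  set (Rs := Rpower (IZR s) (- zeta)).
  assert (HRs : 0 < Rs) by apply Rpower_pos'.
  assert (Hdlow : forall n : Z, (1 <= n <= 2 * s)%Z -> C * c2 * Rs <= d n).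
  { intros n Hn. eapply Rle_trans. 2: apply Hdn; lia.
    rewrite Rmult_assoc. apply Rmult_le_compat_l. lra.
    unfold c2, Rs. rewrite Rpower_mult_distr by lra.
    apply Rpower_anti; auto.
    rewrite Z.abs_eq by lia. apply IZR_lt; lia.
    rewrite Z.abs_eq by lia. rewrite <- mult_IZR. apply IZR_le. lia. }
  assert (Hts : C * c2 * Rs <= t_s d s).
  { unfold t_s. apply Rmin_glb; apply Hdlow; lia. }
  assert (HTk : kap * Rs <= T).
  { unfold kap, T. unfold Rdiv.
    assert (/ M <= / sup_norm a) by (apply Rinv_le_contravar; lra).
    assert (C * c2 * C0 * / M * Rs = (C * c2 * Rs) * C0 * / M) by ring.
    assert (0 < / M) by (apply Rinv_0_lt_compat; lra).
    assert ((C * c2 * Rs) * C0 * / M <= t_s d s * C0 * / M).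
    { apply Rmult_le_compat_r. lra. apply Rmult_le_compat_r; lra. }
    assert (t_s d s * C0 * / M <= t_s d s * C0 * / sup_norm a).
    { apply Rmult_le_compat_l. nra. lra. }
    lra. }
  set (aT := PI * T / (8 * B * (L * T + 1))).
  set (U := 1 - 3 / 4 * (1 - cos aT)).
  assert (Hfour : forall k, T <= Rabs k -> rhat_abs2 r k <= U).
  { intros k Hk. apply (four_bound r L B); auto. }
  unfold A_s. fold T.
  set (Ek := fun y => exists k : R, T <= Rabs k /\ y = rhat_abs2 r k).
  assert (Hsup : Rsup Ek <= U).
  { assert (Hl : is_lub Ek (Rsup Ek)).
    { apply Rsup_lub. exists (rhat_abs2 r T). exists T. split; [rewrite Rabs_right; lra|reflexivity].
      exists U. intros y [k [Hk ->]]. auto. }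
    apply Hl. intros y [k [Hk ->]]. auto. }
  assert (HaT : PI * T / (8 * B * (L + 1)) <= aT).
  { assert (HLT0 : 0 <= L * T) by nra. assert (HLT1 : L * T <= L) by nra.
    unfold aT. unfold Rdiv. apply Rmult_le_compat_l. nra.
    apply Rinv_le_contravar. nra. apply Rmult_le_compat_l; lra. }
  assert (HaT0 : 0 < PI * T / (8 * B * (L + 1))) by (apply Rdiv_lt_0_compat; nra).
  assert (HaT1 : aT <= PI / 2).
  { assert (HLT0 : 0 <= L * T) by nra. assert (HBp : 8 <= 8 * B * (L * T + 1)) by nra.
    unfold aT. apply (Rmult_le_reg_r (8 * B * (L * T + 1))). lra.
    unfold Rdiv. rewrite Rmult_assoc, Rinv_l by lra. nra. }
  pose proof (lam_lower aT ltac:(lra)) as Hlam.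
  assert (HcT : c1 * T ^ 2 <= aT ^ 2 / 4).
  { unfold c1. replace ((PI / (8 * B * (L + 1))) ^ 2 / 4 * T ^ 2) with ((PI * T / (8 * B * (L + 1))) ^ 2 / 4)
      by (field; nra).
    assert ((PI * T / (8 * B * (L + 1))) ^ 2 <= aT ^ 2) by (apply pow_incr; lra). lra. }
  set (x := 3 / 64 * c1 * T ^ 2).
  assert (Hc1s : c1 <= 1 / 64).
  { unfold c1. assert (PI / (8 * B * (L + 1)) <= 1 / 4).
    { assert (H16 : 16 <= 8 * B * (L + 1)) by nra.
      apply (Rmult_le_reg_r (8 * B * (L + 1))). lra. unfold Rdiv. rewrite Rmult_assoc, Rinv_l by lra. lra. }
    assert (0 <= PI / (8 * B * (L + 1))) by (apply Rlt_le, Rdiv_lt_0_compat; nra).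
    assert ((PI / (8 * B * (L + 1))) ^ 2 <= (1/4) ^ 2) by (apply pow_incr; lra). lra. }
  assert (HT2 : T ^ 2 <= 1) by (pose proof (pow_incr T 1 2 ltac:(lra)); simpl in *; nra).
  assert (Hx0 : 0 <= x) by (unfold x; pose proof (pow_le T 2 ltac:(lra)); nra).
  assert (Hx1 : x <= 1) by (unfold x; nra).
  assert (Hin : 15 / 16 + 1 / 16 * Rsup Ek <= 1 - x) by (unfold x, U in *; lra).
  assert (Hsq : sqrt (15 / 16 + 1 / 16 * Rsup Ek) <= 1 - x / 2).
  { eapply Rle_trans. apply sqrt_le_1_alt. exact Hin.
    rewrite <- (sqrt_pow2 (1 - x / 2)) by lra. apply sqrt_le_1_alt. nra. }
  eapply Rle_trans. exact Hsq.
  eapply Rle_trans. 2: apply exp_mono.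
  2: { instantiate (1 := - (x / 2)).
       assert (HR2 : Rpower (IZR s) (- (2 * zeta)) = Rs * Rs).
       { unfold Rs. rewrite <- Rpower_plus. f_equal. ring. }
       rewrite HR2. unfold x.
       assert (Hk0 : 0 <= kap * Rs) by nra.
       assert (Hkk : kap * Rs * (kap * Rs) <= T ^ 2).
       { replace (T ^ 2) with (T * T) by ring. apply Rmult_le_compat; lra. }
       replace (gam * (Rs * Rs)) with (3 / 128 * c1 * (kap * Rs * (kap * Rs))) by (unfold gam; ring).
       assert (3 / 128 * c1 * (kap * Rs * (kap * Rs)) <= 3 / 128 * c1 * T ^ 2) by (apply Rmult_le_compat_l; lra).
       lra. }
  pose proof (exp_ineq1_le (- (x / 2))). lra.
Qed.
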